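(* Let $p>0$ and suppose $\mathbb{E}|Y_0|^p<\infty$ and $\mathbb{E}|\varepsilon_1|^p<\infty$. Consider the TAR(1) model $Y_t=Y_{t-1}+\varepsilon_t$ if $Y_{t-1}>r$, $Y_t=\beta Y_{t-1}+\varepsilon_t$ if $Y_{t-1}\le r$ ($t\ge1$), with $\beta<1$ and $r\in\mathbb{R}$. Then there is a constant $C$ (depending only on $p,\beta,r$, not on $n$ or on the event) such that for every $n\ge 0$ and every event $A$, $$\mathbb{E}|Y_n|^pI\{Y_n\le r, A\}\le C\Big(\sup_k\mathbb{E}|\varepsilon_k|^pI\{A\}+\mathbb{E}|Y_0|^pI\{A\}+\mathbb{P}(A)\Big).$$
   Context: Standing assumptions: $\{\varepsilon_t\}_{t\ge1}$ is an i.i.d. sequence of real random variables with $\mathbb{E}\varepsilon_1=0$ and $\mathbb{E}\varepsilon_1^2=\sigma^2\in(0,\infty)$; the initial value $Y_0$ is a random variable independent of $\{\varepsilon_t\}_{t\ge1}$. $I\{\cdot\}$ denotes an indicator, and $I\{Y_n\le r,A\}$ the indicator of $\{Y_n\le r\}\cap A$. *)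

(* Defs.v *)
From HB Require Import structures.
From mathcomp Require Import all_boot all_order all_algebra.
From mathcomp Require Import all_classical all_reals all_analysis.
Set Implicit Arguments. Unset Strict Implicit. Unset Printing Implicit Defensive.
Import Order.TTheory GRing.Theory Num.Theory.
Local Open Scope classical_set_scope.
Local Open Scope ring_scope.

Fixpoint tar {T : Type} {R : realType} (beta r : R) (Y0 : T -> R)
    (eps : nat -> T -> R) (n : nat) (x : T) : R :=
  match n with
  | 0%N => Y0 x
  | m.+1 => let y := tar beta r Y0 eps m x in
            (if r < y then y else beta * y) + eps m.+1 x
  end.

Definition init_innov_family {T : Type} {R : Type} (Y0 : T -> R)
    (eps : nat -> T -> R) (i : nat) : T -> R :=
  if i == 0%N then Y0 else eps i.

Definition mutually_independent {d} {T : measurableType d} {R : realType}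
    (P : probability T R) (X : nat -> T -> R) : Prop :=
  forall (S : seq nat) (B : nat -> set R),
    uniq S -> (forall i, measurable (B i)) ->
    P (\bigcap_(i in [set` S]) (X i @^-1` B i)) =
    (\prod_(i <- S) P (X i @^-1` B i))%E.

Definition identically_distributed {d} {T : measurableType d} {R : realType}
    (P : probability T R) (eps : nat -> {RV P >-> R}) : Prop :=
  forall i, (0 < i)%N -> distribution P (eps i) = distribution P (eps 1%N).

(* Main.v *)
Require Import Defs.
Set Warnings "-all".
From HB Require Import structures.
From mathcomp Require Import all_boot all_order all_algebra.
From mathcomp Require Import all_classical all_reals all_analysis measurable_realfun.
From mathcomp Require Import ring lra.
Import Order.TTheory GRing.Theory Num.Theory.
Local Open Scope ring_scope.
Local Open Scope classical_set_scope.
Local Open Scope ring_scope.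

Section RL.
Variable R : realType.

Lemma powR_mono (p a b : R) : 0 < p -> 0 <= a -> a <= b -> a `^ p <= b `^ p.
Proof.
move=> p0 a0 ab; apply: (ge0_ler_powR (ltW p0)) => //; rewrite nnegrE //.
exact: le_trans ab.
Qed.

Lemma L2 (p a b : R) : 0 < p -> 0 <= a -> 0 <= b ->
  (a + b) `^ p <= 2 `^ p * (a `^ p + b `^ p).
Proof.
move=> p0 a0 b0.
wlog ab : a b a0 b0 / a <= b.
  move=> H; have [ab|ba] := leP a b; first exact: H.
  by rewrite addrC [a `^ p + _]addrC; apply: H => //; exact: ltW.
have h : (a + b) `^ p <= (2 * b) `^ p.
  by apply: powR_mono => //; [exact: addr_ge0|lra].
apply: (le_trans h); rewrite powRM ?ler0n //.
rewrite ler_pM2l ?powR_gt0 ?ltr0n //.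
by rewrite lerDr powR_ge0.
Qed.

Lemma L1 (p beta x y : R) : 0 < p -> 0 <= beta -> beta < 1 -> 0 <= x -> 0 <= y ->
  (beta * x + y) `^ p <= ((1 + beta) / 2) `^ p * x `^ p + (2 / (1 - beta)) `^ p * y `^ p.
Proof.
move=> p0 b0 b1 x0 y0.
have g0 : 0 <= (1 + beta) / 2 by lra.
have k0 : 0 <= 2 / (1 - beta) by apply: divr_ge0; lra.
have A0 : 0 <= ((1 + beta) / 2) `^ p * x `^ p by apply: mulr_ge0; apply: powR_ge0.
have B0 : 0 <= (2 / (1 - beta)) `^ p * y `^ p by apply: mulr_ge0; apply: powR_ge0.
have [yx|xy] := leP y (((1 + beta)/2 - beta) * x).
  suff h : (beta * x + y) `^ p <= ((1 + beta) / 2) `^ p * x `^ p.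
    by apply: (le_trans h); rewrite lerDl.
  rewrite -powRM //; apply: powR_mono => //; first by nra.
  nra.
suff h : (beta * x + y) `^ p <= (2 / (1 - beta)) `^ p * y `^ p.
  by apply: (le_trans h); rewrite lerDr.
rewrite -powRM //; apply: powR_mono => //; first by nra.
have h1 : 0 < 1 - beta by lra.
have hd : 0 < (1 + beta) / 2 - beta by lra.
have e : 2 / (1 - beta) * y = y / ((1 + beta) / 2 - beta).
  by field; lra.
rewrite e.
have hx : x <= y / ((1 + beta) / 2 - beta).
  by rewrite ler_pdivlMr // mulrC; apply: ltW.
have : beta * x <= beta * (y / ((1 + beta) / 2 - beta)) by apply: ler_wpM2l.
have : y / ((1 + beta) / 2 - beta) * ((1 + beta)/2 - beta) = y by field; lra.
set z := y / _ => ez hz.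
nra.
Qed.
End RL.

Section PW.
Variable R : realType.
Variables p beta r : R.
Hypothesis p0 : 0 < p.
Hypothesis b1 : beta < 1.
Definition G (z : R) : R := if z <= r then `|z| `^ p else 0.
Definition b0 := Num.max beta 0.
Definition q := ((1 + b0) / 2) `^ p.
Definition K0 := (2 / (1 - b0)) `^ p.
Definition K1 := K0 + 2 `^ p.
Definition K2 := 2 `^ p * (`|r| + `|beta * r|) `^ p.

Lemma G_ge0 z : 0 <= G z.
Proof. by rewrite /G; case: ifP => _ //; apply: powR_ge0. Qed.

Lemma b0_ge0 : 0 <= b0. Proof. by rewrite /b0 le_max lexx orbT. Qed.
Lemma b0_lt1 : b0 < 1. Proof. by rewrite /b0 gt_max b1 ltr01. Qed.

Lemma q_ge0 : 0 <= q. Proof. exact: powR_ge0. Qed.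
Lemma q_lt1 : q < 1.
Proof.
have h0 := b0_ge0; have h1 := b0_lt1.
have := @gt0_ltr_powR R p p0 ((1+b0)/2) 1; rewrite powR1 /= /q; apply;
  rewrite ?nnegrE; lra.
Qed.
Lemma K1_ge0 : 0 <= K1. Proof. by apply: addr_ge0; apply: powR_ge0. Qed.
Lemma K2_ge0 : 0 <= K2. Proof. by apply: mulr_ge0; apply: powR_ge0. Qed.

Lemma pathwise y e :
  G ((if r < y then y else beta * y) + e) <= q * G y + K1 * `|e| `^ p + K2.
Proof.
have qG : 0 <= q * G y by apply: mulr_ge0; [exact: q_ge0|exact: G_ge0].
have K1e : 0 <= K1 * `|e| `^ p by apply: mulr_ge0; [exact: K1_ge0|exact: powR_ge0].
have K2p := K2_ge0.
have ep : 0 <= `|e| `^ p by apply: powR_ge0.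
have tp : 0 <= 2 `^ p by apply: powR_ge0.
have K0p : 0 <= K0 by apply: powR_ge0.
rewrite {1}/G; set Y := (if r < y then y else beta * y) + e.
case: ifP => Yr; last by rewrite !addr_ge0.
have gen : `|Y| <= `|e| + (`|r| + `|beta * r|) ->
    `|Y| `^ p <= q * G y + K1 * `|e| `^ p + K2.
  move=> hY.
  have h := @L2 R p (`|e|) (`|r| + `|beta * r|) p0 (normr_ge0 _)
              (addr_ge0 (normr_ge0 _) (normr_ge0 _)).
  have h' : `|Y| `^ p <= (`|e| + (`|r| + `|beta * r|)) `^ p by apply: powR_mono.
  apply: (le_trans h'); apply: (le_trans h).
  rewrite mulrDr /K2 /K1 mulrDl; nra.
move: Yr gen; rewrite /Y; clear Y; case: ifP => ry Yr gen.
  apply: gen.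
  have : -(`|e|) <= e <= `|e| by rewrite -ler_norml.
  have hr : -(`|r|) <= r <= `|r| by rewrite -ler_norml.
  have := normr_ge0 (beta * r).
  rewrite ler_norml; lra.
have [bn|bp] := ltP beta 0.
  apply: gen.
  have : -(`|e|) <= e <= `|e| by rewrite -ler_norml.
  move/negbT: ry; rewrite -leNgt => ry.
  have hr : -(`|r|) <= r <= `|r| by rewrite -ler_norml.
  have hbr : -(`|beta * r|) <= beta * r <= `|beta * r| by rewrite -ler_norml.
  have : beta * r <= beta * y by rewrite ler_wnM2l //; lra.
  rewrite ler_norml; lra.
have eb : b0 = beta by rewrite /b0 max_l.
move/negbT: ry; rewrite -leNgt => ry.
have hY : `|beta * y + e| <= beta * `|y| + `|e|.
  by apply: (le_trans (ler_normD _ _)); rewrite normrM ger0_norm.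
have h : (beta * `|y| + `|e|) `^ p <= q * `|y| `^ p + K0 * `|e| `^ p.
  by rewrite /q /K0 eb; exact: (@L1 R p beta `|y| `|e| p0 bp b1 (normr_ge0 y) (normr_ge0 e)).
have h' : `|beta * y + e| `^ p <= (beta * `|y| + `|e|) `^ p by apply: powR_mono.
rewrite /G ry /K1.
apply: (le_trans h'); apply: (le_trans h).
rewrite mulrDl; nra.
Qed.
End PW.

Section Meas.
Variables (R : realType) (p beta r : R).
Hypothesis p0 : 0 < p.
Hypothesis b1 : beta < 1.
Variables (d : measure_display) (T : measurableType d) (P : probability T R).
Variables (Y0 : {RV P >-> R}) (eps : nat -> {RV P >-> R}).

Let Y n := tar beta r Y0 (fun i => eps i) n.

Lemma mY n : measurable_fun setT (Y n).
Proof.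
elim: n => [|n IH] /=; first exact: measurable_funPT.
rewrite /Y /=.
apply: measurable_funD; last exact: measurable_funPT.
apply: measurable_fun_ifT => //.
  exact: measurable_fun_ltr.
by apply: measurable_funM.
Qed.

Lemma mG : measurable_fun setT (@G R p r).
Proof.
have h1 : measurable_fun [set: R] (fun z : R => z <= r).
  exact: (measurable_fun_ler (f := id) (g := cst r)).

have h2 : measurable_fun [set: R] (fun z : R => `|z| `^ p).
  have h := measurableT_comp (measurable_powR p) (@normr_measurable R setT).
  exact: h.
exact: (measurable_fun_ifT h1 h2 (measurable_cst (0:R))).
Qed.

Lemma mGY n : measurable_fun setT (fun x => @G R p r (Y n x)).
Proof. exact: measurableT_comp mG (mY n). Qed.


Variable A : set T.
Hypothesis mA : measurable A.

Let a n := (\int[P]_(x in A) (@G R p r (Y n x))%:E)%E.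

Lemma lhs_eq n : (\int[P]_(x in A `&` [set x | (Y n x <= r)%R]) (`|Y n x| `^ p)%:E = a n)%E.
Proof.
rewrite integral_mkcondr; apply: eq_integral => x _.
rewrite patchE /G.
case: ifPn => [/set_mem /= ->//|/negP h].
by case: ifPn => // h'; exfalso; apply: h; exact: mem_set.
Qed.

Lemma meps n : measurable_fun setT (fun x => `|eps n x| `^ p).
Proof.
have h := measurableT_comp (measurable_powR p)
   (measurableT_comp (@normr_measurable R setT) (measurable_funPT (eps n))).
exact: h.
Qed.

Lemma step n :
  (a n.+1 <= (@q R p beta)%:E * a n
      + (@K1 R p beta)%:E * \int[P]_(x in A) (`|eps n.+1 x| `^ p)%:E
      + (@K2 R p beta r)%:E * P A)%E.
Proof.
have qp := @q_ge0 R p beta.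
have K1p := @K1_ge0 R p beta.
have K2p := @K2_ge0 R p beta r.
have mG1 : measurable_fun A (fun x => (@G R p r (Y n.+1 x))%:E).
  exact/measurable_EFinP/measurable_funTS/mGY.
have mG0 : measurable_fun setT (fun x => @G R p r (Y n x)) by exact: mGY.
have m1 : measurable_fun A (fun x => ((@q R p beta) * @G R p r (Y n x))%:E).
  apply/measurable_EFinP/measurable_funTS.
  exact: measurable_funM.
have m2 : measurable_fun A (fun x => ((@K1 R p beta) * `|eps n.+1 x| `^ p)%:E).
  apply/measurable_EFinP/measurable_funTS.
  apply: measurable_funM => //; exact: meps.
have m3 : measurable_fun A (fun x => ((@K2 R p beta r))%:E) by [].
apply: (@le_trans _ _ (\int[P]_(x in A) (((@q R p beta) * @G R p r (Y n x))%:E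
   + ((@K1 R p beta) * `|eps n.+1 x| `^ p)%:E + ((@K2 R p beta r))%:E))%E).
  apply: ge0_le_integral => //.
  - by move=> x _; rewrite lee_fin; exact: G_ge0.
  - by apply: emeasurable_funD => //; apply: emeasurable_funD.
  - move=> x _; rewrite -!EFinD lee_fin /Y /=.
    exact: pathwise.
rewrite ge0_integralD //; last 2 first.
  - by move=> x _; apply: adde_ge0; rewrite lee_fin; apply: mulr_ge0 => //;
      first [exact: G_ge0|exact: powR_ge0].
  - by apply: emeasurable_funD.
rewrite ge0_integralD //; last 2 first.
  - by move=> x _; rewrite lee_fin; apply: mulr_ge0 => //; exact: G_ge0.
  - by move=> x _; rewrite lee_fin; apply: mulr_ge0 => //; exact: powR_ge0.
under eq_integral => x _ do rewrite EFinM.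
under [X in (_ + X + _)%E]eq_integral => x _ do rewrite EFinM.
rewrite integral_cst //.
rewrite ge0_integralZl_EFin //; last 2 first.
  - by move=> x _; rewrite lee_fin; exact: G_ge0.
  - exact/measurable_EFinP/measurable_funTS.
rewrite ge0_integralZl_EFin //.
exact/measurable_EFinP/measurable_funTS/meps.
Qed.




Lemma base : (a 0 <= \int[P]_(x in A) (`|Y0 x| `^ p)%:E)%E.
Proof.
apply: ge0_le_integral => //.
- by move=> x _; rewrite lee_fin; exact: G_ge0.
- exact/measurable_EFinP/measurable_funTS/mGY.
- apply/measurable_EFinP/measurable_funTS.
  have h := measurableT_comp (measurable_powR p)
   (measurableT_comp (@normr_measurable R setT) (measurable_funPT Y0)).
  exact: h.
- move=> x _; rewrite lee_fin /G /Y /=; case: ifP => // _; exact: powR_ge0.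
Qed.

End Meas.

Theorem lemma3p1 (R : realType) (p beta r : R) :
  0 < p -> beta < 1 ->
  exists C : R, 0 < C /\
  forall (d : measure_display) (T : measurableType d) (P : probability T R)
    (Y0 : {RV P >-> R}) (eps : nat -> {RV P >-> R}),
    (* standing assumptions *)
    identically_distributed eps ->
    mutually_independent P (init_innov_family (fun x => Y0 x) (fun i x => eps i x)) ->
    P.-integrable setT (fun x => ((eps 1%N x) ^+ 2)%:E) ->
    'E_P[eps 1%N]%E = 0%E ->
    (0 < 'V_P[eps 1%N])%E ->
    (* moment hypotheses *)
    (\int[P]_x (`|Y0 x| `^ p)%:E < +oo)%E ->
    (\int[P]_x (`|eps 1%N x| `^ p)%:E < +oo)%E ->
    forall (n : nat) (A : set T), measurable A ->
      (\int[P]_(x in A `&` [set x | (tar beta r Y0 (fun i => eps i) n x <= r)%R])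
          (`|tar beta r Y0 (fun i => eps i) n x| `^ p)%:E
       <= C%:E * (ereal_sup [set (\int[P]_(x in A) (`|eps k x| `^ p)%:E)
                             | k in [set k : nat | (0 < k)%N]]
                  + \int[P]_(x in A) (`|Y0 x| `^ p)%:E
                  + P A))%E.
Proof.
move=> p0 b1.
set q := @q R p beta; set K1 := @K1 R p beta; set K2 := @K2 R p beta r.
have qp : 0 <= q := @q_ge0 R p beta.
have q1 : q < 1 := @q_lt1 R p beta p0 b1.
have K1p : 0 <= K1 := @K1_ge0 R p beta.
have K2p : 0 <= K2 := @K2_ge0 R p beta r.
exists (Num.max 1 ((K1 + K2) / (1 - q))).
set C := Num.max 1 _.
have C1 : 1 <= C by rewrite le_max lexx.
have hC : (K1 + K2) / (1 - q) <= C by rewrite le_max lexx orbT.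
have hC' : q * C + K1 + K2 <= C.
  move: hC; rewrite ler_pdivrMr; last lra.
  nra.
split; first lra.
move=> d T P Y0 eps _ _ _ _ _ _ _ n A mA.
rewrite lhs_eq /=.
set S := ereal_sup _.
set Yi := (\int[P]_(x in A) (`|Y0 x| `^ p)%:E)%E.
have hS k : (0 < k)%N -> (\int[P]_(x in A) (`|eps k x| `^ p)%:E <= S)%E.
  by move=> k0; apply: ereal_sup_ubound; exists k.
have Yi0 : (0 <= Yi)%E.
  by apply: integral_ge0 => x _; rewrite lee_fin; exact: powR_ge0.
have S0 : (0 <= S)%E.
  apply: le_trans (hS 1%N isT).
  by apply: integral_ge0 => x _; rewrite lee_fin; exact: powR_ge0.
have PA0 : (0 <= P A)%E by exact: measure_ge0.
have X0 : (0 <= S + Yi + P A)%E by apply: adde_ge0 => //; apply: adde_ge0.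
have SX : (S <= S + Yi + P A)%E by rewrite -addeA; apply: leeDl; exact: adde_ge0.
have YX : (Yi <= S + Yi + P A)%E.
  by apply: (le_trans (leeDr _ S0)); exact: leeDl.
have PX : (P A <= S + Yi + P A)%E by apply: leeDr; exact: adde_ge0.
set X := (S + Yi + P A)%E in X0 SX YX PX *.
elim: n => [|n IH].
  apply: le_trans (@base R p beta r d T P Y0 eps A mA) _.
  apply: le_trans YX _.
  by rewrite -[X in (X <= _)%E]mul1e; apply: lee_wpmul2r => //; rewrite lee_fin.
apply: le_trans (@step R p beta r p0 b1 d T P Y0 eps A mA n) _.
rewrite -/q -/K1 -/K2.
have h1 : ((q%:E * \int[P]_(x in A) (G R p r (tar beta r Y0 (fun i => eps i) n x))%:E)
    <= (q * C)%:E * X)%E.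
  by rewrite EFinM -muleA; apply: lee_wpmul2l => //; rewrite lee_fin.
have h2 : (K1%:E * \int[P]_(x in A) (`|eps n.+1 x| `^ p)%:E <= K1%:E * X)%E.
  apply: lee_wpmul2l; first by rewrite lee_fin.
  exact: le_trans (hS n.+1 isT) SX.
have h3 : (K2%:E * P A <= K2%:E * X)%E.
  by apply: lee_wpmul2l; first by rewrite lee_fin.
apply: le_trans (leeD (leeD h1 h2) h3) _.
have qC : 0 <= q * C by apply: mulr_ge0 => //; lra.
rewrite -!ge0_muleDl ?adde_ge0 ?lee_fin //.
by apply: lee_wpmul2r => //; rewrite -!EFinD lee_fin.
Qed.
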